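(* Let $n\ge0$ and let $w,u\in S_n$ be such that $\operatorname{Des}(u)\subseteq\operatorname{LRM}'(w)$. Then $uw\le_{\mathrm{lex}}w$.
   Context: $S_n$ is the symmetric group on $[n]=\{1,\dots,n\}$, with product $(uw)(i)=u(w(i))$. $\operatorname{Des}(u)=\{i\in[n-1]:u(i)>u(i+1)\}$. The set of left-to-right minima of $w\in S_n$ is $\operatorname{LRM}(w)=\{i\in[n]: w(k)>i \text{ for all } k<w^{-1}(i)\}$ (the entries smaller than all entries to their left in the one-line notation $w(1)w(2)\cdots w(n)$), and $\operatorname{LRM}'(w)=\{\ell-1:\ell\in\operatorname{LRM}(w),\ \ell>1\}\subseteq[n-1]$. The relation $\le_{\mathrm{lex}}$ compares permutations by lexicographic comparison of their one-line notations $(\sigma(1),\dots,\sigma(n))$. *)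

(* Defs.v *)
(* Permutations of [n] are 'S_n = {perm 'I_n}; the value
   i : 'I_n (0-based) stands for i+1 in [n]. All notions below are stated
   with the paper's 1-based conventions via the one-line notation. *)
From mathcomp Require Import all_boot all_order all_fingroup.
Set Implicit Arguments. Unset Strict Implicit. Unset Printing Implicit Defensive.
Import Order.TTheory.

Definition oneline n (s : 'S_n) : seq nat := [seq (s i).+1 | i <- enum 'I_n].

Definition val1 n (s : 'S_n) (i : nat) : nat := nth 0 (oneline s) i.-1.

Definition pos1 n (s : 'S_n) (l : nat) : nat := (index l (oneline s)).+1.

(* Product with (uw)(i) = u(w(i)); in MathComp (w * u)%g x = u (w x). *)
Definition pmul n (u w : 'S_n) : 'S_n := (w * u)%g.

Definition Des n (u : 'S_n) : pred nat :=
  [pred i | (1 <= i <= n.-1) && (val1 u i.+1 < val1 u i)].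

Definition LRM n (w : 'S_n) : pred nat :=
  [pred i | (1 <= i <= n) && all (fun k => i < val1 w k) (iota 1 (pos1 w i).-1)].

Definition LRM' n (w : 'S_n) : pred nat :=
  [pred j | (1 <= j) && LRM w j.+1].

Definition lex_le n (s t : 'S_n) : bool :=
  ((oneline s : seqlexi nat) <= (oneline t : seqlexi nat))%O.

(* Main.v *)
Require Import Defs.
From mathcomp Require Import all_boot all_order all_fingroup.
From mathcomp Require Import zify.
Import Order.TTheory.
Lemma lex_aux (s t : seq nat) : size s = size t ->
  (forall i, i < size s -> (forall k, k < i -> nth 0 s k = nth 0 t k) ->
     nth 0 s i <> nth 0 t i -> nth 0 s i < nth 0 t i) ->
  ((s : seqlexi nat) <= (t : seqlexi nat))%O.
Proof.
elim: s t => [|x s IH] [|y t] //= [] Hst H.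
rewrite lexi_cons !leEnat.
have [exy|nxy] := eqVneq x y.
  subst y; rewrite leqnn /=; apply: IH => // i Hi Hk.
  apply: (H i.+1) => // -[|k] //= Hk'; exact: Hk.
have := H 0 isT (fun k (hk : k < 0) => False_ind _ (notF hk)) (fun e => negP nxy (introT eqP e)) => /= lt.
by rewrite (ltnW lt) leqNgt lt.
Qed.
Lemma key n (w u : 'S_n) :
  (forall c c' : 'I_n, nat_of_ord c = c'.+1 -> u c < u c' ->
      forall p : 'I_n, p < (w^-1)%g c -> c < w p) ->
  forall i : 'I_n, (forall k : 'I_n, k < i -> u (w k) = w k) ->
  u (w i) != w i -> u (w i) < w i.
Proof.
move=> H0 i Hfix Hne.
set a := w i in Hne *.
rewrite ltnNge; apply/negP => Hle.
have Hlt : a < u a.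
  rewrite ltn_neqAle Hle andbT; apply: contraNneq Hne => E.
  by apply/eqP; apply: val_inj; rewrite /= -E.
have claim : forall k (c : 'I_n), nat_of_ord c = a + k -> c + (k == 0) <= u c.
  elim=> [|k IH] c Hc.
    have -> : c = a by apply: val_inj; rewrite /= Hc addn0.
    by rewrite addn1.
  have [Hp|Hp] := ltnP ((w^-1)%g c) i.
    have := Hfix _ Hp; rewrite permKV => ->; by rewrite addn0.
  have Hk : a + k < n by have := ltn_ord c; rewrite Hc; lia.
  pose c' := Ordinal Hk.
  have := IH c' erefl => IH'.
  have Hcc' : u c' < u c.
    rewrite ltn_neqAle; apply/andP; split.
      apply/negP => /eqP /val_inj /perm_inj Ee.
      by move: (congr1 val Ee) => /=; rewrite Hc; lia.
    rewrite leqNgt; apply/negP => Hd.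
    have Hi : i < (w^-1)%g c.
      rewrite ltn_neqAle Hp andbT; apply/negP => /eqP Ei.
      have : a = c by rewrite /a (val_inj Ei) permKV.
      by move=> Eac; move: Hc; rewrite -Eac; lia.
    have := H0 c c' ltac:(by rewrite Hc addnS) Hd i Hi.
    by rewrite -/a Hc; lia.
  move: IH'; rewrite Hc /=; case: (k == 0) => /= IH'; lia.
have Hall : forall c : 'I_n, a <= c -> a < u c.
  move=> c Hac; have := claim (c - a) c ltac:(lia).
  case: eqP => /= E; lia.
pose A := [set c : 'I_n | a <= c].
pose B := [set c : 'I_n | a < c].
have sub1 : u @: A \subset B.
  apply/subsetP => x /imsetP [c]; rewrite !inE => Hc ->; exact: Hall.
have pr : B \proper A.
  apply/properP; split.
    by apply/subsetP => x; rewrite !inE; apply: ltnW.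
  by exists a; rewrite !inE ?leqnn ?ltnn.
have := subset_leq_card sub1; rewrite card_imset; last exact: perm_inj.
by rewrite leqNgt (proper_card pr).
Qed.

Lemma nth_oneline n (s : 'S_n) (i : 'I_n) : nth 0 (oneline s) i = (s i).+1.
Proof. by rewrite /oneline (nth_map i) ?size_enum_ord // nth_ord_enum. Qed.

Lemma size_oneline n (s : 'S_n) : size (oneline s) = n.
Proof. by rewrite /oneline size_map size_enum_ord. Qed.

Lemma index_oneline n (s : 'S_n) (x : 'I_n) : index (x.+1) (oneline s) = (s^-1)%g x.
Proof.
rewrite /oneline -{1}(permKV s x).
rewrite (index_map (f := fun i => (s i).+1)) ?index_enum_ord //.
by move=> y z [] /val_inj /perm_inj.
Qed.

Theorem lemma3p4 (n : nat) (w u : 'S_n) :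
  {subset Des u <= LRM' w} -> lex_le (pmul u w) w.
Proof.
move=> Hsub; rewrite /lex_le; apply: lex_aux; first by rewrite !size_oneline.
rewrite size_oneline => i Hi Hk.
pose io := Ordinal Hi.
have -> : i = io by [].
rewrite !nth_oneline /pmul permM => Hne.
have Hne' : u (w io) != w io by apply/eqP => E; apply: Hne; rewrite E.
suff : u (w io) < w io by [].
apply: (@key n w u _ io _ Hne').
- move=> c c' Hc Hd p Hp.
  have HD : (c : nat) \in Des u.
    rewrite inE /Defs.val1 /= nth_oneline Hc /= -Hc nth_oneline ltnS Hd andbT.
    have := ltn_ord c; lia.
  have := Hsub _ HD; rewrite inE /= => /andP [_]; rewrite /Defs.LRM inE /= => /andP [_].
  rewrite /Defs.pos1 index_oneline /= => /allP /(_ p.+1).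
  rewrite mem_iota => H; have := H ltac:(apply/andP; split; lia).
  by rewrite /Defs.val1 /= nth_oneline ltnS.
- move=> k Hki.
  have := Hk k Hki; rewrite !nth_oneline /pmul permM; by case=> /val_inj.
Qed.
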